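(* Let $A$ be a locally convex topological vector space and give $\mathrm{Max}\,A$ the topology $\mathcal T$ generated by the sets $\mathcal U_{0,V}=\{W\in\mathrm{Max}\,A:W\not\subset V\}$, $V\in\mathrm{Max}\,A$. Then $(\mathrm{Max}\,A,\mathcal T)$ is sober, and for every $V\in\mathrm{Max}\,A$ the complement of the closure of $\{V\}$ equals $\mathcal U_{0,V}$.
   Context: $\mathrm{Max}\,A$ is the set of closed linear subspaces of $A$. A space is sober if every irreducible closed set is the closure of a unique point. *)

(* Defs.v *)
From HB Require Import structures.
From mathcomp Require Import all_boot all_order all_algebra.
From mathcomp Require Import all_classical all_reals all_analysis.
Set Implicit Arguments. Unset Strict Implicit. Unset Printing Implicit Defensive.
Import Order.TTheory GRing.Theory Num.Theory.
Local Open Scope classical_set_scope.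
Local Open Scope ring_scope.

Definition linear_subspace (K : numDomainType) (A : lmodType K) (V : set A) : Prop :=
  V 0 /\ forall (a : K) (x y : A), V x -> V y -> V (a *: x + y).

Definition is_closed_subspace (K : numDomainType) (A : tvsType K) (V : set A) : Prop :=
  closed V /\ linear_subspace V.

Definition MaxA (K : numDomainType) (A : tvsType K) : Type :=
  {V : set A | is_closed_subspace V}.

Definition U0 (K : numDomainType) (A : tvsType K) (V : set A) : set (MaxA A) :=
  [set W | ~ (proj1_sig W `<=` V)].

HB.instance Definition _ (K : numDomainType) (A : tvsType K) :=
  gen_eqMixin (MaxA A).
HB.instance Definition _ (K : numDomainType) (A : tvsType K) :=
  gen_choiceMixin (MaxA A).

HB.instance Definition _ (K : numDomainType) (A : tvsType K) :=
  @isSubBaseTopological.Build (MaxA A) (set A) (@is_closed_subspace K A) (@U0 K A).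

Definition irreducible (T : topologicalType) (F : set T) : Prop :=
  F !=set0 /\
  forall F1 F2 : set T, closed F1 -> closed F2 -> F1 `<=` F -> F2 `<=` F ->
    F = F1 `|` F2 -> F1 = F \/ F2 = F.

Definition sober (T : topologicalType) : Prop :=
  forall F : set T, closed F -> irreducible F -> exists! x : T, F = closure [set x].

(* Main.v *)
Require Import Defs.
From HB Require Import structures.
From mathcomp Require Import all_boot all_order all_algebra.
From mathcomp Require Import all_classical all_reals all_analysis.
Local Open Scope classical_set_scope.
Set Implicit Arguments.
Section S.
Variables (K : numFieldType) (A : tvsType K).
Lemma open_up (O : set (MaxA A)) : open O -> forall W W' : MaxA A, O W -> proj1_sig W `<=` proj1_sig W' -> O W'.
Proof.
move=> [D' sD <-] W W' [B DB BW] WW'.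
exists B => //.
have := sD _ DB => -[F sF eB]; move: BW; rewrite -eB /= => BW.
move=> i Fi; move: (BW i Fi); rewrite /U0 /= => nW sW; apply: nW.
by move=> x /WW' /sW.
Qed.
Lemma U0_open (V : MaxA A) : open (U0 (proj1_sig V)).
Proof.
exists [set U0 (proj1_sig V)]; last by rewrite bigcup_set1.
move=> _ ->; apply: finI_from1. exact: (proj2_sig V).
Qed.
Lemma closed_sep (F : set (MaxA A)) : closed F -> forall W, ~ F W ->
  exists s : seq (set A), (forall V, V \in s -> is_closed_subspace V) /\
   (forall X, F X -> exists V, V \in s /\ sval X `<=` V) /\
   (forall V, V \in s -> ~ sval W `<=` V).
Proof.
move=> cF W nFW.
have : open (~` F) by rewrite -closedC setCK.
move=> [D' sD eD].
have : (~` F) W by [].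
rewrite -eD => -[B DB BW].
have := sD _ DB => -[G sG eB]; move: BW; rewrite -eB /= => BW.
have BF : forall X, B X -> ~ F X.
  by move=> X BX FX; have : (~` F) X by rewrite -eD; exists B.
exists (finmap.enum_fset G); split.
  by move=> V VG; have /(_ VG) /set_mem := sG V.
split; last by move=> V VG; exact: (BW V VG).
move=> X FX; apply: contrapT => nex; apply: (BF X) => //.
rewrite -eB => V VG sXV; apply: nex; exists V; split => //.
Qed.

Lemma closure1E (V : MaxA A) : closure [set V] = [set W | sval W `<=` sval V].
Proof.
rewrite predeqE => W; split.
  move=> cW; apply: contrapT => nW.
  have nb : nbhs W (U0 (sval V)) by apply: open_nbhs_nbhs; split => //; exact: U0_open.
  have [x [xV Vx]] := cW _ nb; rewrite xV in Vx.
  by apply: Vx.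
move=> WV B; rewrite nbhsE; case=> O [oO OW] OB.
exists V; split => //; apply: OB; exact: (@open_up O oO W V OW WV).
Qed.

Lemma CV_closed (V : set A) (h : is_closed_subspace V) :
  closed [set X : MaxA A | sval X `<=` V].
Proof.
have -> : [set X : MaxA A | sval X `<=` V] = closure [set (exist _ V h : MaxA A)].
  by rewrite closure1E.
exact: closed_closure.
Qed.

Lemma union_closed (s : seq (set A)) : (forall V, V \in s -> is_closed_subspace V) ->
  closed [set X : MaxA A | exists V, V \in s /\ sval X `<=` V].
Proof.
elim: s => [|a s IH] hs.
  have -> : [set X : MaxA A | exists V, V \in [::] /\ sval X `<=` V] = set0.
    by rewrite predeqE => X; split => // -[V []].
  exact: closed0.
have -> : [set X : MaxA A | exists V, V \in a :: s /\ sval X `<=` V] =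
   [set X : MaxA A | sval X `<=` a] `|` [set X : MaxA A | exists V, V \in s /\ sval X `<=` V].
  rewrite predeqE => X; split.
    move=> [V [+ XV]]; rewrite in_cons => /orP [/eqP Va|Vs]; first by left; rewrite -Va.
    by right; exists V.
  case=> [Xa|[V [Vs XV]]]; first by exists a; rewrite mem_head.
  by exists V; rewrite in_cons Vs orbT.
apply: closedU.
  by apply: CV_closed; apply: hs; rewrite mem_head.
by apply: IH => V Vs; apply: hs; rewrite in_cons Vs orbT.
Qed.

Lemma irr_union (F : set (MaxA A)) : closed F -> irreducible F ->
  forall s : seq (set A), (forall V, V \in s -> is_closed_subspace V) ->
  F `<=` [set X | exists V, V \in s /\ sval X `<=` V] ->
  exists V, V \in s /\ F `<=` [set X | sval X `<=` V].
Proof.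
move=> cF [[X0 FX0] irr]; elim => [|a s IH] hs Fs.
  by have [V []] := Fs _ FX0.
have ha : is_closed_subspace a by apply: hs; rewrite mem_head.
have hs' : forall V, V \in s -> is_closed_subspace V.
  by move=> V Vs; apply: hs; rewrite in_cons Vs orbT.
have := irr (F `&` [set X | sval X `<=` a])
  (F `&` [set X | exists V, V \in s /\ sval X `<=` V]).
case.
- by apply: closedI => //; exact: CV_closed.
- by apply: closedI => //; exact: union_closed.
- by move=> X [].
- by move=> X [].
- rewrite predeqE => X; split; last by case=> -[].
  move=> FX; have [V [+ XV]] := Fs X FX; rewrite in_cons => /orP [/eqP Va|Vs].
    by left; split => //; rewrite -Va.
  by right; split => //; exists V.
- by move=> E; exists a; split; [rewrite mem_head|rewrite -E => X []].
- move=> E; have [V [Vs FV]] : exists V, V \in s /\ F `<=` [set X | sval X `<=` V].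
    by apply: IH => //; rewrite -E => X [].
  by exists V; split => //; rewrite in_cons Vs orbT.
Qed.

Theorem main : sober (MaxA A) /\
  forall V : MaxA A, ~` closure [set V] = U0 (proj1_sig V).
Proof.
split; last first.
  by move=> V; rewrite closure1E predeqE.
move=> F cF irrF.
pose S := [set V : set A | is_closed_subspace V /\ forall X, F X -> sval X `<=` V].
pose D := \bigcap_(V in S) V.
have pf : is_closed_subspace D.
  split.
    by apply: closed_bigI => V [[]].
  split.
    by move=> V [[_ []]].
  move=> a x y Dx Dy V SV; have [[_ [_ h]] _] := SV; apply: h; [exact: Dx|exact: Dy].
have FE : F = closure [set (exist _ D pf : MaxA A)].
  rewrite closure1E predeqE => X /=; split.
    by move=> FX a Xa V [_ h]; exact: (h X FX a Xa).
  move=> XD; apply: contrapT => nFX.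
  have [s [hs [cov nW]]] := closed_sep cF X nFX.
  have [V [Vs FV]] := irr_union cF irrF s hs cov.
  apply: (nW V Vs) => a Xa.
  by apply: (XD a Xa); split; [exact: hs|exact: FV].
exists (exist _ D pf); split => // y Fy.
have E : D = sval y.
  rewrite eqEsubset; split.
    have : closure [set y] (exist _ D pf) by rewrite -Fy FE closure1E.
    by rewrite closure1E.
  have : closure [set (exist _ D pf : MaxA A)] y by rewrite -FE Fy closure1E.
  by rewrite closure1E.
case: y Fy E => Y hY /= _ E; subst Y.
by rewrite (Prop_irrelevance pf hY).
Qed.
End S.

Unset Implicit Arguments.
Theorem lemma3p8 (K : numFieldType) (A : tvsType K) :
  sober (MaxA A) /\
  forall V : MaxA A, ~` closure [set V] = U0 (proj1_sig V).
Proof. exact: main. Qed.
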